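(* Let $\eta>0$, $n\ge1$, $b\in\{1,\dots,n\}$. Let $X_n=(x_1,\dots,x_n)$ and $\hat X_n=(\hat x_1,\dots,\hat x_n)$ with $x_i=(a_i,y_i)$, $\hat x_i=(\hat a_i,\hat y_i)\in\mathcal{X}\subseteq\mathbb{R}^d\times\mathbb{R}$, such that $x_i=\hat x_i$ for all but at most one index $i$. Assume $\sup_{x\in\mathcal{X}}\Vert x\Vert\le D<\infty$. Let $(\Omega_k)_{k\ge1}$ be i.i.d. uniformly random subsets of $\{1,\dots,n\}$ of cardinality $b$, and let $P$ and $\hat P$ be the transition kernels of the chains $\theta_k=\left(I-\frac{\eta}{b}H_k\right)\theta_{k-1}+\frac{\eta}{b}q_k$ and $\hat\theta_k=\left(I-\frac{\eta}{b}\hat H_k\right)\hat\theta_{k-1}+\frac{\eta}{b}\hat q_k$, where $H_k=\sum_{i\in\Omega_k}a_ia_i^\top$, $q_k=\sum_{i\in\Omega_k}a_iy_i$, $\hat H_k=\sum_{i\in\Omega_k}\hat a_i\hat a_i^\top$, $\hat q_k=\sum_{i\in\Omega_k}\hat a_i\hat y_i$. Let $\hat V(\theta)=1+\Vert\theta\Vert$. Then $$\sup_{\theta\in\mathbb{R}^d}\frac{\mathcal{W}_1(\delta_\theta P,\delta_\theta\hat P)}{\hat V(\theta)}\le\frac{2\eta D^2}{n}.$$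
   Context: $\delta_\theta P$ denotes $P(\theta,\cdot)$, the law of one step of the chain started at $\theta$. $\mathcal{W}_1$ is the 1-Wasserstein distance $\inf\mathbb{E}\Vert X-Y\Vert$ over couplings. *)

(* Defs.v *)
From HB Require Import structures.
From mathcomp Require Import all_boot all_order all_algebra.
From mathcomp Require Import classical_sets reals.
Set Implicit Arguments. Unset Strict Implicit. Unset Printing Implicit Defensive.
Import Order.TTheory GRing.Theory Num.Theory.
Local Open Scope ring_scope.
Local Open Scope classical_set_scope.

Definition enorm (R : realType) (d : nat) (v : 'cV[R]_d) : R :=
  Num.sqrt (\sum_(k < d) v k 0 ^+ 2).

Definition pnorm (R : realType) (d : nat) (x : 'cV[R]_d * R) : R :=
  Num.sqrt (\sum_(k < d) x.1 k 0 ^+ 2 + x.2 ^+ 2).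

(* 1-Wasserstein distance between two finitely supported probability laws
   mu = sum_s w1 s * delta_(f s) and nu = sum_s w2 s * delta_(g s) on R^d,
   as the infimum of E||X - Y|| over couplings (X,Y).  Every coupling of such
   laws is carried by the product of the supports, hence is a nonnegative
   matrix pi over S * S with marginals w1 and w2. *)
Definition W1_disc (R : realType) (d : nat) (S : finType)
    (w1 w2 : S -> R) (f g : S -> 'cV[R]_d) : R :=
  inf [set c : R | exists pi : {ffun S * S -> R},
     [/\ forall st, 0 <= pi st,
         forall s, \sum_(t : S) pi (s, t) = w1 s,
         forall t, \sum_(s : S) pi (s, t) = w2 t &
         c = \sum_(st : S * S) pi st * enorm (f st.1 - g st.2)]].

Definition unif_subset (R : realType) (n b : nat) (O : {set 'I_n}) : R :=
  if #|O| == b then ('C(n, b)%:R)^-1 else 0.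

Definition sgd_step (R : realType) (d n b : nat) (eta : R)
    (a : 'I_n -> 'cV[R]_d) (y : 'I_n -> R) (theta : 'cV[R]_d)
    (O : {set 'I_n}) : 'cV[R]_d :=
  let H := \sum_(i in O) (a i *m (a i)^T) in
  let q := \sum_(i in O) (y i *: a i) in
  (1%:M - (eta / b%:R) *: H) *m theta + (eta / b%:R) *: q.

(* Main.v *)
Require Import Defs.
From HB Require Import structures.
From mathcomp Require Import all_boot all_order all_algebra.
From mathcomp Require Import classical_sets reals.
From mathcomp Require Import ring lra zify.
Import Order.TTheory GRing.Theory Num.Theory.
Local Open Scope ring_scope.
Local Open Scope classical_set_scope.
Section E.
Variables (R : realType) (d : nat).
Implicit Types u v : 'cV[R]_d.

Definition dotv u v : R := \sum_(k < d) u k 0 * v k 0.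

Lemma sumsq_ge0 u : 0 <= \sum_(k < d) u k 0 ^+ 2.
Proof. by apply: sumr_ge0 => k _; exact: sqr_ge0. Qed.

Lemma enorm_ge0 u : 0 <= enorm u.
Proof. exact: sqrtr_ge0. Qed.

Lemma enorm_sq u : enorm u ^+ 2 = \sum_(k < d) u k 0 ^+ 2.
Proof. by rewrite /enorm sqr_sqrtr // sumsq_ge0. Qed.

Lemma CS2 u v : dotv u v ^+ 2 <= (\sum_(k < d) u k 0 ^+ 2) * (\sum_(k < d) v k 0 ^+ 2).
Proof.
set A := \sum_(k < d) u k 0 ^+ 2; set B := \sum_(k < d) v k 0 ^+ 2.
have H : 0 <= \sum_(i < d) \sum_(j < d) (u i 0 * v j 0 - u j 0 * v i 0) ^+ 2.
  by apply: sumr_ge0 => i _; apply: sumr_ge0 => j _; exact: sqr_ge0.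
have S1 : \sum_(i < d) \sum_(j < d) (u i 0 ^+ 2 * v j 0 ^+ 2) = A * B.
  by rewrite /A mulr_suml; apply: eq_bigr => i _; rewrite mulr_sumr.
have S2 : \sum_(i < d) \sum_(j < d) (u j 0 ^+ 2 * v i 0 ^+ 2) = A * B.
  by rewrite exchange_big S1.
have S3 : \sum_(i < d) \sum_(j < d) (u i 0 * v i 0 * (u j 0 * v j 0)) = dotv u v ^+ 2.
  by rewrite expr2 /dotv mulr_suml; apply: eq_bigr => i _; rewrite mulr_sumr.
have E : \sum_(i < d) \sum_(j < d) (u i 0 * v j 0 - u j 0 * v i 0) ^+ 2 =
   \sum_(i < d) \sum_(j < d) (u i 0 ^+ 2 * v j 0 ^+ 2) +
   \sum_(i < d) \sum_(j < d) (u j 0 ^+ 2 * v i 0 ^+ 2) -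
   2 * \sum_(i < d) \sum_(j < d) (u i 0 * v i 0 * (u j 0 * v j 0)).
  rewrite -big_split /= mulr_sumr -sumrB; apply: eq_bigr => i _.
  rewrite -big_split /= mulr_sumr -sumrB; apply: eq_bigr => j _.
  ring.
rewrite E S1 S2 S3 in H. lra.
Qed.

Lemma CS u v : `|dotv u v| <= enorm u * enorm v.
Proof.
rewrite -ler_sqr ?nnegrE ?mulr_ge0 ?enorm_ge0 //.
by rewrite real_normK ?num_real // exprMn !enorm_sq CS2.
Qed.

Lemma enormD u v : enorm (u + v) <= enorm u + enorm v.
Proof.
rewrite -ler_sqr ?nnegrE ?addr_ge0 ?enorm_ge0 //.
have : dotv u v <= enorm u * enorm v by apply: le_trans (CS u v); exact: ler_norm.
rewrite sqrrD !enorm_sq /dotv.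
have -> : \sum_(k < d) (u + v) k 0 ^+ 2 = \sum_(k < d) u k 0 ^+ 2 + \sum_(k < d) v k 0 ^+ 2 + 2 * \sum_(k < d) u k 0 * v k 0.
  rewrite mulr_sumr -!big_split /=; apply: eq_bigr => k _; rewrite mxE; ring.
lra.
Qed.

Lemma enormZ c u : enorm (c *: u) = `|c| * enorm u.
Proof.
rewrite /enorm -sqrtr_sqr -sqrtrM ?sqr_ge0 // mulr_sumr.
by congr Num.sqrt; apply: eq_bigr => k _; rewrite mxE exprMn.
Qed.

Lemma enormN u : enorm (- u) = enorm u.
Proof. by rewrite -scaleN1r enormZ normrN normr1 mul1r. Qed.

Lemma aat_mul (a t : 'cV[R]_d) : (a *m a^T) *m t = dotv a t *: a.
Proof.
rewrite -mulmxA [a^T *m t]mx11_scalar mul_mx_scalar; congr (_ *: _).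
by rewrite mxE; apply: eq_bigr => k _; rewrite mxE.
Qed.

Lemma step_eq n b eta (a : 'I_n -> 'cV[R]_d) y t O :
  sgd_step b eta a y t O = t + (eta / b%:R) *: \sum_(i in O) (y i - dotv (a i) t) *: a i.
Proof.
rewrite /sgd_step mulmxBl mul1mx -scalemxAl mulmx_suml.
under eq_bigr => i _ do rewrite aat_mul.
rewrite -addrA; congr (_ + _).
rewrite -scalerN -scalerDr; congr (_ *: _).
rewrite -sumrN -big_split /=; apply: eq_bigr => i _.
by rewrite scalerBl addrC.
Qed.

Lemma step_diff n b eta (a ah : 'I_n -> 'cV[R]_d) y yh t O j :
  (forall i, i != j -> a i = ah i /\ y i = yh i) ->
  sgd_step b eta a y t O - sgd_step b eta ah yh t O =
  if j \in O then (eta / b%:R) *: ((y j - dotv (a j) t) *: a j - (yh j - dotv (ah j) t) *: ah j)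
  else 0.
Proof.
move=> Hj; rewrite !step_eq opprD addrACA subrr add0r -scalerBr -sumrB.
case: ifP => jO.
  rewrite (bigD1 j) //= big1 ?addr0 // => i /andP[_ ij].
  by have [-> ->] := Hj i ij; rewrite subrr.
rewrite big1 ?scaler0 // => i iO.
have ij : i != j by apply: contraFN jO => /eqP <-.
by have [-> ->] := Hj i ij; rewrite subrr.
Qed.

Lemma term_bound (a : 'cV[R]_d) (y D : R) t :
  pnorm (a, y) <= D ->
  enorm ((y - dotv a t) *: a) <= D ^+ 2 * (1 + enorm t).
Proof.
move=> HD.
have Ha : enorm a <= D.
  apply: le_trans HD; rewrite /enorm /pnorm /= ler_wsqrtr // lerDl; exact: sqr_ge0.
have Hy : `|y| <= D.
  apply: le_trans HD; rewrite /pnorm /= -sqrtr_sqr ler_wsqrtr // lerDr; exact: sumsq_ge0.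
have Ht := enorm_ge0 t; have Ha0 := enorm_ge0 a.
rewrite enormZ.
have H1 : `|y - dotv a t| <= D + D * enorm t.
  apply: le_trans (ler_normB _ _) _; apply: lerD => //.
  apply: le_trans (CS a t) _; exact: ler_wpM2r.
apply: le_trans (ler_wpM2r Ha0 H1) _.
have D0 : 0 <= D by apply: le_trans Ha.
apply: le_trans (ler_wpM2l _ Ha) _; first by rewrite addr_ge0 // mulr_ge0.
by rewrite le_eqVlt; apply/orP; left; apply/eqP; ring.
Qed.
End E.
Local Close Scope classical_set_scope.
Lemma card_contain n b (j : 'I_n) : (1 <= b)%N ->
  (#|[set O : {set 'I_n} | (#|O| == b) && (j \in O)]| * n = b * 'C(n, b))%N.
Proof.
move=> b1.
have HA := cardsID [set O : {set 'I_n} | j \in O] [set O : {set 'I_n} | #|O| == b].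
rewrite card_draws card_ord in HA.
have E2 : #|[set O : {set 'I_n} | #|O| == b] :\: [set O : {set 'I_n} | j \in O]| = 'C(n.-1, b).
  have Hc : #|[set~ j]| = n.-1 by rewrite cardsC1 card_ord.
  rewrite -Hc -cards_draws; apply: eq_card => O.
  by rewrite !inE finset.subsetC finset.sub1set !inE.
have E1 : [set O : {set 'I_n} | (#|O| == b) && (j \in O)] =
   [set O : {set 'I_n} | #|O| == b] :&: [set O : {set 'I_n} | j \in O].
  by apply/setP => O; rewrite !inE.
rewrite E1; case: n j HA E2 E1 => [|n] j; first by case: j.
case: b b1 => // b _ HA E2 _.
rewrite E2 /= binS in HA.
rewrite addnC in HA; move/addnI: HA => ->.
by rewrite mulnC -(mul_bin_diag n.+1 b).
Qed.

Local Open Scope classical_set_scope.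
Theorem lemma3p3 (R : realType) (d n b : nat) (eta D : R)
  (X : set ('cV[R]_d * R))
  (a ahat : 'I_n -> 'cV[R]_d) (y yhat : 'I_n -> R) :
  0 < eta -> (1 <= n)%N -> (1 <= b <= n)%N ->
  (forall x, X x -> pnorm x <= D) ->
  (forall i, X (a i, y i)) -> (forall i, X (ahat i, yhat i)) ->
  (exists j : 'I_n, forall i, i != j -> a i = ahat i /\ y i = yhat i) ->
  forall theta : 'cV[R]_d,
    W1_disc (@unif_subset R n b) (@unif_subset R n b)
        (@sgd_step R d n b eta a y theta) (@sgd_step R d n b eta ahat yhat theta)
      / (1 + enorm theta)
    <= 2 * eta * D ^+ 2 / n%:R.
Proof.
move=> eta0 n1 /andP[b1 bn] HD Ha Hah [j Hj] theta.
set w := @unif_subset R n b.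
set f := sgd_step b eta a y theta.
set g := sgd_step b eta ahat yhat theta.
have w0 : forall O, 0 <= w O.
  by move=> O; rewrite /w /unif_subset; case: ifP => // _; rewrite invr_ge0 ler0n.
pose pi := [ffun st : {set 'I_n} * {set 'I_n} => if st.1 == st.2 then w st.1 else 0].
have pi0 : forall st, 0 <= pi st by move=> st; rewrite ffunE; case: ifP.
pose c := \sum_(st : {set 'I_n} * {set 'I_n}) pi st * enorm (f st.1 - g st.2).
have inner : forall (F : {set 'I_n} -> {set 'I_n} -> R) s,
    \sum_t pi (s, t) * F s t = w s * F s s.
  move=> F s; rewrite (bigD1 s) //= big1 ?addr0; first by rewrite ffunE eqxx.
  by move=> t ts; rewrite ffunE /= eq_sym (negbTE ts) mul0r.
have inner' : forall s, \sum_t pi (t, s) = w s.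
  move=> s; rewrite (bigD1 s) //= big1 ?addr0; first by rewrite ffunE eqxx.
  by move=> t ts; rewrite ffunE /= (negbTE ts).
have Hc : c = \sum_O w O * enorm (f O - g O).
  rewrite /c; symmetry.
  under eq_bigr => s _ do rewrite -(inner (fun s t => enorm (f s - g t)) s).
  rewrite pair_bigA /=; apply: eq_bigr => -[s t] _ //.
have W : W1_disc w w f g <= c.
  apply: ge_inf.
    exists 0 => x [p [p0 _ _ ->]].
    by apply: sumr_ge0 => st _; rewrite mulr_ge0 // enorm_ge0.
  exists pi; split => //.
    by move=> s; rewrite -[w s]mulr1 -(inner (fun _ _ => 1)); apply: eq_bigr => t _; rewrite mulr1.
set K := eta / b%:R * (2 * D ^+ 2 * (1 + enorm theta)).
have Hfg : forall O, enorm (f O - g O) <= (j \in O)%:R * K.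
  move=> O; rewrite /f /g (@step_diff _ _ _ _ _ _ _ _ _ _ _ _ Hj).
  case: ifP => jO; last by rewrite mul0r /enorm big1 ?sqrtr0 // => k _; rewrite mxE expr0n.
  rewrite mul1r enormZ /K ger0_norm; last by rewrite divr_ge0 ?ler0n ?ltW.
  apply: ler_wpM2l; first by rewrite divr_ge0 ?ler0n ?ltW.
  apply: le_trans (enormD _ _ _ _) _; rewrite enormN.
  have T1 := term_bound _ _ _ _ _ theta (HD _ (Ha j)).
  have T2 := term_bound _ _ _ _ _ theta (HD _ (Hah j)).
  lra.
have Hsum : \sum_O w O * ((j \in O)%:R * K) = K * (b%:R / n%:R).
  have -> : \sum_O w O * ((j \in O)%:R * K) = K * \sum_O w O * (j \in O)%:R.
    rewrite mulr_sumr; apply: eq_bigr => O _; ring.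
  congr (_ * _).
  rewrite (eq_bigr (fun O : {set 'I_n} => if (#|O| == b) && (j \in O) then ('C(n,b)%:R : R)^-1 else 0)); last first.
    by move=> O _; rewrite /w /unif_subset; case: (#|O| == b); case: (j \in O) => /=; rewrite ?mulr1 ?mulr0.
  rewrite -big_mkcond /= sumr_const.
  have Hcc := @card_contain n b j b1.
  have C0 : ('C(n, b)%:R : R) != 0 by rewrite pnatr_eq0 -lt0n bin_gt0.
  have n0 : (n%:R : R) != 0 by rewrite pnatr_eq0 -lt0n.
  set N := #|_|.
  have -> : N = #|[set O : {set 'I_n} | (#|O| == b) && (j \in O)]%SET|.
    by apply: eq_card => O; rewrite finset.inE.
  rewrite -[_^-1 *+ _]mulr_natr mulrC; apply/eqP; rewrite eqr_div // -natrM -natrM Hcc; apply/eqP; set zz := (b * _)%N; clearbody zz; reflexivity.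
have Hc2 : c <= K * (b%:R / n%:R).
  rewrite Hc -Hsum; apply: ler_sum => O _; exact: ler_wpM2l.
have t0 : 0 < 1 + enorm theta by have := enorm_ge0 _ _ theta; lra.
rewrite ler_pdivrMr //; apply: (le_trans W); apply: (le_trans Hc2).
have n0 : (n%:R : R) != 0 by rewrite pnatr_eq0 -lt0n.
have b0 : (b%:R : R) != 0 by rewrite pnatr_eq0 -lt0n.
rewrite /K le_eqVlt; apply/orP; left; apply/eqP; field; exact/andP.
Qed.
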